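(* Let $(X,\leq)$ be a continuous dcpo and $p$ a partial metric on $X$ such that $\leq$ coincides with $\leq_p$. Then the following are equivalent: (1) $\mathcal O_p(X)\subseteq\mathcal O_\sigma(X)$; (2) open $p$-balls are finitely accessible, i.e. for every open ball $B^p_\epsilon(x)$ and every $y\in B^p_\epsilon(x)$ there is $y'\ll y$ with $y'\in B^p_\epsilon(x)$; (3) $p$ is Scott-continuous as a map into $([0,+\infty],\geq)$, i.e. for all $x\in X$ and all directed $\Delta\subseteq X$, $p(x,\bigvee\Delta)=\inf_{d\in\Delta}p(x,d)$.
   Context: A partial metric (PM) on $X$ is $p:X\times X\to[0,+\infty]$ with, for all $x,y,z$: $p(x,x)\leq p(x,y)$; if $p(x,x)=p(x,y)=p(y,y)$ then $x=y$; $p(x,y)=p(y,x)$; $p(x,y)\leq p(x,z)+p(z,y)-p(z,z)$. Its order: $x\leq_p y$ iff $p(x,y)\leq p(x,x)$. Open balls $B^p_\epsilon(x)=\{y\mid p(y,x)<p(x,x)+\epsilon\}$; $\mathcal O_p(X)$ is the topology of unions of open balls. In a dcpo, $x\ll y$ iff for every directed $\Delta$ with $y\leq\bigvee\Delta$ there is $d\in\Delta$ with $x\leq d$; a basis is $B\subseteq X$ such that for each $x$ the set $\{y\in B\mid y\ll x\}$ is directed with join $x$; a dcpo is continuous if it has a basis. $\mathcal O_\sigma(X)$ (Scott topology) consists of upper sets $U$ such that $x\in U$ implies $y\in U$ for some $y\ll x$. *)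

(* Defs.v *)
From HB Require Import structures.
From mathcomp Require Import all_boot all_order all_algebra.
From mathcomp Require Import all_classical all_reals ereal.
Set Implicit Arguments. Unset Strict Implicit. Unset Printing Implicit Defensive.
Import Order.TTheory GRing.Theory Num.Theory.
Local Open Scope classical_set_scope.
Local Open Scope ring_scope.

Section Defs.
Variables (R : realType) (X : Type).

(* Partial metric p : X * X -> [0, +oo].  The triangle inequality
   p(x,y) <= p(x,z) + p(z,y) - p(z,z) is written without subtraction,
   as p(x,y) + p(z,z) <= p(x,z) + p(z,y). *)
Definition partial_metric (p : X -> X -> \bar R) : Prop :=
  [/\ (forall x y, (0 <= p x y)%E),
      (forall x y, (p x x <= p x y)%E),
      (forall x y, p x x = p x y -> p x y = p y y -> x = y),
      (forall x y, p x y = p y x) &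
      (forall x y z, (p x y + p z z <= p x z + p z y)%E)].

Definition ple (p : X -> X -> \bar R) (x y : X) : Prop := (p x y <= p x x)%E.

Definition pball (p : X -> X -> \bar R) (x : X) (eps : R) : set X :=
  [set y | (p y x < p x x + eps%:E)%E].

Definition p_open (p : X -> X -> \bar R) (U : set X) : Prop :=
  exists F : set (X * R),
    (forall i, F i -> 0 < i.2) /\
    U = \bigcup_(i in F) pball p i.1 i.2.

Variable le : X -> X -> Prop.

Definition directed (D : set X) : Prop :=
  (exists d, D d) /\
  (forall a b, D a -> D b -> exists2 c, D c & le a c /\ le b c).

Definition is_lub (D : set X) (s : X) : Prop :=
  (forall d, D d -> le d s) /\ (forall u, (forall d, D d -> le d u) -> le s u).

Definition dcpo : Prop :=
  [/\ (forall x, le x x),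
      (forall x y, le x y -> le y x -> x = y),
      (forall x y z, le x y -> le y z -> le x z) &
      (forall D, directed D -> exists s, is_lub D s)].

Definition way_below (x y : X) : Prop :=
  forall D s, directed D -> is_lub D s -> le y s -> exists2 d, D d & le x d.

Definition basis (B : set X) : Prop :=
  forall x, directed [set y | B y /\ way_below y x] /\
            is_lub [set y | B y /\ way_below y x] x.

Definition continuous_dcpo : Prop := dcpo /\ exists B, basis B.

Definition upper_set (U : set X) : Prop := forall x y, U x -> le x y -> U y.

Definition scott_open (U : set X) : Prop :=
  upper_set U /\ (forall x, U x -> exists2 y, way_below y x & U y).

End Defs.

(* Main.v *)
Require Import Defs.
From HB Require Import structures.
From mathcomp Require Import all_boot all_order all_algebra.
From mathcomp Require Import all_classical all_reals ereal.
From mathcomp Require Import lra.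
Import Order.TTheory GRing.Theory Num.Theory.
Local Open Scope classical_set_scope.
Local Open Scope ring_scope.

Lemma antitone_p (R : realType) (X : Type) (p : X -> X -> \bar R) x y z :
  partial_metric p -> ple p x y -> (p z y <= p z x)%E.
Proof.
case=> p0 pxx psep psym ptri; rewrite /ple => Hxy.
have Exy : p x y = p x x by apply/le_anti; rewrite Hxy pxx.
have T := ptri z y x.
case Hf: (p x x \is a fin_num).
  by move: T; rewrite Exy leeD2rE.
have : p x x = +oo%E.
  move: Hf (p0 x x); case: (p x x) => //.
have := pxx x z; rewrite (psym x z) => H1 H2.
by move: H1; rewrite H2 leye_eq => /eqP ->; rewrite leey.
Qed.

Theorem mainTheorem5 (R : realType) (X : Type) (le : X -> X -> Prop)
  (p : X -> X -> \bar R) :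
  continuous_dcpo le ->
  partial_metric p ->
  (forall x y, le x y <-> ple p x y) ->
  [/\ ((forall U : set X, p_open p U -> scott_open le U) <->
       (forall (x : X) (eps : R), 0 < eps ->
          forall y, pball p x eps y ->
          exists2 y', way_below le y' y & pball p x eps y')),
      ((forall (x : X) (eps : R), 0 < eps ->
          forall y, pball p x eps y ->
          exists2 y', way_below le y' y & pball p x eps y') <->
       (forall (x : X) (D : set X) (s : X), directed le D -> is_lub le D s ->
          p x s = ereal_inf [set p x d | d in D])) &
      ((forall U : set X, p_open p U -> scott_open le U) <->
       (forall (x : X) (D : set X) (s : X), directed le D -> is_lub le D s ->
          p x s = ereal_inf [set p x d | d in D]))].
Proof.
move=> [[lrefl lanti ltrans _] [B HB]] pm Hle.
have pm' := pm; case: pm' => p0 pxx psep psym ptri.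
have anti : forall x y z, le x y -> (p z y <= p z x)%E.
  by move=> x y z /Hle; apply: antitone_p.
have E12 : (forall U : set X, p_open p U -> scott_open le U) <->
       (forall (x : X) (eps : R), 0 < eps ->
          forall y, pball p x eps y ->
          exists2 y', way_below le y' y & pball p x eps y').
  split.
    move=> H x eps eps0 y Hy.
    have Ho : p_open p (pball p x eps).
      exists [set (x, eps)]; split; first by move=> i ->.
      apply/seteqP; split=> z; first by move=> h; exists (x, eps).
      by case=> i /= -> .
    have [_ H2] := H _ Ho.
    exact: H2.
  move=> H U [F [HF ->]]; split.
    move=> a b [i Fi Ha] Hab; exists i => //.
    rewrite /pball /= (psym b) ; rewrite /pball /= (psym a) in Ha.
    exact: le_lt_trans (anti _ _ _ Hab) Ha.
  move=> a [i Fi Ha].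
  have [y' H1 H2] := H i.1 i.2 (HF i Fi) a Ha.
  by exists y' => //; exists i.
have E23 : (forall (x : X) (eps : R), 0 < eps ->
          forall y, pball p x eps y ->
          exists2 y', way_below le y' y & pball p x eps y') <->
       (forall (x : X) (D : set X) (s : X), directed le D -> is_lub le D s ->
          p x s = ereal_inf [set p x d | d in D]).
  split.
    move=> H x D s HD [Hub Hlub]; apply/le_anti/andP; split.
      apply/ereal_infP => _ [d Dd <-]; exact: anti _ _ _ (Hub d Dd).
    case Hf: (p x s \is a fin_num); last first.
      have -> : p x s = +oo%E by move: Hf (p0 x s); case: (p x s).
      by rewrite leey.
    have Hxx : p x x \is a fin_num.
      move: Hf (pxx x s) (p0 x x); case: (p x s) => // r _.
      by case: (p x x).
    move: Hf Hxx; case Es: (p x s) => [r| |] //; case Ex: (p x x) => [a| |] // _ _.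
    apply/lee_addgt0Pr => e e0.
    have rad0 : 0 < r + e - a.
      have : (a%:E <= r%:E)%E by rewrite -Ex -Es.
      rewrite lee_fin => ar; lra.
    have Hs : pball p x (r + e - a) s.
      by rewrite /pball /= psym Es Ex lte_fin; lra.
    have [y' Hw Hy'] := H x _ rad0 s Hs.
    have [d Dd Hd] := Hw D s HD (conj Hub Hlub) (lrefl s).
    apply: ge_ereal_inf; exists (p x d); first by exists d.
    apply: le_trans (anti _ _ x Hd) _; rewrite psym; apply/ltW.
    move: Hy'; rewrite /pball /= Ex -EFinD.
    by rewrite addrC subrK.
  move=> H x eps eps0 y Hy.
  have [Hdir Hlub] := HB y.
  have Heq := H x _ y Hdir Hlub.
  have : (ereal_inf [set p x d | d in [set y0 | B y0 /\ way_below le y0 y]]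
            < p x x + eps%:E)%E by rewrite -Heq psym.
  case/ereal_inf_lt => _ [d [Bd Wd] <-] Hd.
  by exists d => //; rewrite /pball /= psym.
split => //.
exact: iff_trans E12 E23.
Qed.
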